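(* Let $D(z)=\frac{1-\sqrt{1-4z^2}}{2z^2}$, $E(z)=zD(z)=\frac{1-\sqrt{1-4z^2}}{2z}$ and $M_{up}(z,u)=\frac{uE(z)}{1-uE(z)}$. Then for every $k\ge 1$, \[ F_k(z,u)=\frac{1}{z^{k-2}}\frac{d}{dz}\left(z^{k-1}\,\frac{u\,F_{k-1}(z,u)-E(z)\,F_{k-1}(z,E(z))}{u-E(z)}\,M_{up}(z,u)\right), \] where $F_0(z,u)=1$; and for every $k\ge 0$, \[ B_k(z)=F_k(z,E(z))\,D(z). \]
   Context: A bicolored Dyck meander is a finite sequence of steps from $\{U_1,U_2,D\}$, where $U_1$ and $U_2$ raise the height by $1$ and $D$ lowers it by $1$, starting at height $0$ and never going below height $0$; its length is its number of steps. A bicolored Dyck path is a bicolored Dyck meander ending at height $0$. The weight of such a path is the product, over all its $U_2$ steps, of $m+j-1$, where that $U_2$ step is the $m$-th step of the path and the $j$-th $U_2$ step of the path ($U_1$ and $D$ steps have weight $1$). For $k\ge1$, let $f_{k,n,\ell}$ be the total weight of bicolored Dyck meanders of length $n$ with exactly $k$ steps $U_2$, whose last step is a $U_2$ step, and which end at height $\ell$; set $F_k(z,u)=\sum_{n,\ell\ge 0}f_{k,n,\ell}z^nu^\ell$. For $k\ge 0$, $B_k(z)$ is the sum over all bicolored Dyck paths with exactly $k$ steps $U_2$ of (weight)$\cdot z^{\text{length}}$. *)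

(* Defs.v *)
From Stdlib Require Import Reals List Arith Bool.
From Coquelicot Require Import Coquelicot.
Import ListNotations.
Open Scope R_scope.

(** Steps of a bicolored Dyck meander: U1, U2 (up, +1) and Dn (down, -1). *)
Inductive step : Type := U1 | U2 | Dn.

Fixpoint words (n : nat) : list (list step) :=
  match n with
  | O => [ [] ]
  | S m => flat_map (fun w => [U1 :: w; U2 :: w; Dn :: w]) (words m)
  end.

Fixpoint meander_from (h : nat) (p : list step) : option nat :=
  match p with
  | [] => Some h
  | U1 :: q => meander_from (S h) q
  | U2 :: q => meander_from (S h) q
  | Dn :: q => match h with O => None | S h' => meander_from h' q end
  end.

Fixpoint nU2 (p : list step) : nat :=
  match p with
  | [] => O
  | U2 :: q => S (nU2 q)
  | _ :: q => nU2 q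
  end.

Definition last_is_U2 (p : list step) : bool :=
  match rev p with U2 :: _ => true | _ => false end.

(** Weight: [wt m j p], where m is the (1-based) position of the first step
    of p in the whole path and j the number of U2 steps already seen.
    A U2 step at position m which is the (j+1)-th U2 step contributes
    m + (j+1) - 1 = m + j. *)
Fixpoint wt (m j : nat) (p : list step) : nat :=
  match p with
  | [] => 1%nat
  | U2 :: q => ((m + j) * wt (S m) (S j) q)%nat
  | _ :: q => wt (S m) j q
  end.

Definition weight (p : list step) : nat := wt 1 0 p.

Definition ends_at (p : list step) (l : nat) : bool :=
  match meander_from 0 p with Some h => Nat.eqb h l | None => false end.

Definition fcoef (k n l : nat) : nat :=
  list_sum (map (fun w =>
    if (ends_at w l && Nat.eqb (nU2 w) k && last_is_U2 w)%bool
    then weight w else 0%nat) (words n)).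

Definition bcoef (k n : nat) : nat :=
  list_sum (map (fun w =>
    if (ends_at w 0 && Nat.eqb (nU2 w) k)%bool then weight w else 0%nat) (words n)).

(** F_k(z,u) = sum_{n,l} f_{k,n,l} z^n u^l  (f_{k,n,l} = 0 for l > n),
    with the convention F_0 = 1. *)
Definition Fgf (k : nat) (z u : R) : R :=
  match k with
  | O => 1
  | S _ => Series (fun n => z ^ n * sum_f_R0 (fun l => INR (fcoef k n l) * u ^ l) n)
  end.

Definition Bgf (k : nat) (z : R) : R :=
  Series (fun n => INR (bcoef k n) * z ^ n).

Definition Dfun (z : R) : R := (1 - sqrt (1 - 4 * z ^ 2)) / (2 * z ^ 2).
Definition Efun (z : R) : R := (1 - sqrt (1 - 4 * z ^ 2)) / (2 * z).
Definition Mup (z u : R) : R := u * Efun z / (1 - u * Efun z).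

(* Main.v *)
Require Import Defs.
From Stdlib Require Import Reals.
From Coquelicot Require Import Coquelicot.
From Stdlib Require Import List Arith Bool Lia Lra.
Import ListNotations.
Open Scope R_scope.

Fixpoint RS (L : list (list step)) (g : list step -> R) : R :=
  match L with [] => 0 | w :: L' => g w + RS L' g end.

Lemma RS_app L1 L2 g : RS (L1 ++ L2) g = RS L1 g + RS L2 g.
Proof. induction L1; simpl; [ring| rewrite IHL1; ring]. Qed.

Lemma RS_flat_map (h : list step -> list (list step)) L g :
  RS (flat_map h L) g = RS L (fun w => RS (h w) g).
Proof. induction L; simpl; [reflexivity| rewrite RS_app, IHL; reflexivity]. Qed.

Lemma RS_ext_in L f g : (forall w, In w L -> f w = g w) -> RS L f = RS L g.
Proof.
  induction L; simpl; intros H; [reflexivity|].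
  rewrite H by auto. rewrite IHL by auto. reflexivity.
Qed.

Lemma RS_ext L f g : (forall w, f w = g w) -> RS L f = RS L g.
Proof. intros; apply RS_ext_in; auto. Qed.

Lemma RS_plus L f g : RS L (fun w => f w + g w) = RS L f + RS L g.
Proof. induction L; simpl; [ring| rewrite IHL; ring]. Qed.

Lemma RS_scal L c f : RS L (fun w => c * f w) = c * RS L f.
Proof. induction L; simpl; [ring| rewrite IHL; ring]. Qed.

Lemma RS_zero L : RS L (fun _ => 0) = 0.
Proof. induction L; simpl; [ring| rewrite IHL; ring]. Qed.

Lemma words_len n w : In w (words n) -> length w = n.
Proof.
  revert w; induction n; simpl; intros w H.
  - destruct H as [<-|[]]; reflexivity.
  - apply in_flat_map in H. destruct H as [w' [H1 H2]].
    simpl in H2. destruct H2 as [<-|[<-|[<-|[]]]]; simpl; f_equal; auto.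
Qed.

Lemma RS_words_S n g :
  RS (words (S n)) g = RS (words n) (fun w => g (U1 :: w) + g (U2 :: w) + g (Dn :: w)).
Proof.
  simpl words. rewrite RS_flat_map. apply RS_ext. intro w. simpl. ring.
Qed.

Lemma RS_words_snoc n g :
  RS (words (S n)) g = RS (words n) (fun w => g (w ++ [U1]) + g (w ++ [U2]) + g (w ++ [Dn])).
Proof.
  revert g; induction n; intro g.
  - simpl. ring.
  - rewrite RS_words_S. rewrite IHn. rewrite RS_words_S.
    apply RS_ext. intro w. simpl. ring.
Qed.

Lemma RS_words_bound n g M :
  (forall w, length w = n -> Rabs (g w) <= M) -> Rabs (RS (words n) g) <= 3 ^ n * M.
Proof.
  revert g M; induction n; intros g M H.
  - simpl. rewrite Rplus_0_r, Rmult_1_l. apply H; reflexivity.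
  - rewrite RS_words_S.
    replace (3 ^ S n * M) with (3 ^ n * (3 * M)) by (simpl; ring).
    apply IHn. intros w Hw.
    eapply Rle_trans; [apply Rabs_triang|].
    eapply Rle_trans; [apply Rplus_le_compat_r; apply Rabs_triang|].
    assert (H1 := H (U1 :: w)); assert (H2 := H (U2 :: w)); assert (H3 := H (Dn :: w)).
    simpl in H1, H2, H3. rewrite Hw in H1, H2, H3.
    specialize (H1 eq_refl); specialize (H2 eq_refl); specialize (H3 eq_refl). lra.
Qed.

Lemma meander_app h p q :
  meander_from h (p ++ q) =
  match meander_from h p with Some h' => meander_from h' q | None => None end.
Proof.
  revert h; induction p as [|a p IH]; intro h; simpl; [reflexivity|].
  destruct a; try apply IH. destruct h; [reflexivity| apply IH].
Qed.

Lemma nU2_app p q : nU2 (p ++ q) = (nU2 p + nU2 q)%nat.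
Proof. induction p as [|a p IH]; simpl; [reflexivity|]. destruct a; simpl; rewrite ?IH; reflexivity. Qed.

Lemma wt_app m j p q :
  wt m j (p ++ q) = (wt m j p * wt (m + length p) (j + nU2 p) q)%nat.
Proof.
  revert m j; induction p as [|a p IH]; intros m j; simpl.
  - rewrite !Nat.add_0_r. lia.
  - destruct a; simpl; rewrite IH; replace (m + S (length p))%nat with (S m + length p)%nat by lia.
    + reflexivity.
    + replace (j + S (nU2 p))%nat with (S j + nU2 p)%nat by lia. lia.
    + reflexivity.
Qed.

Lemma last_snoc w s : last_is_U2 (w ++ [s]) = match s with U2 => true | _ => false end.
Proof. unfold last_is_U2. rewrite rev_unit. reflexivity. Qed.

Lemma meander_le h p h' : meander_from h p = Some h' -> (h' <= h + length p)%nat.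
Proof.
  revert h; induction p as [|a p IH]; intros h H; simpl in *.
  - injection H; lia.
  - destruct a.
    + apply IH in H; lia.
    + apply IH in H; lia.
    + destruct h; [discriminate|]. apply IH in H; lia.
Qed.

Lemma wt_bound m j p :
  (wt m j p <= (m + j + 2 * length p) ^ nU2 p)%nat.
Proof.
  revert m j; induction p as [|a p IH]; intros m j; simpl; [lia|].
  destruct a; simpl.
  - eapply Nat.le_trans; [apply IH|]. apply Nat.pow_le_mono_l. lia.
  - apply Nat.mul_le_mono.
    + lia.
    + eapply Nat.le_trans; [apply IH|]. apply Nat.pow_le_mono_l. lia.
  - eapply Nat.le_trans; [apply IH|]. apply Nat.pow_le_mono_l. lia.
Qed.

Definition mval (u : R) (w : list step) : R :=
  match meander_from 0 w with Some h => u ^ h | None => 0 end.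
Definition fterm (j : nat) (u : R) (w : list step) : R :=
  if (Nat.eqb (nU2 w) j && last_is_U2 w)%bool then INR (weight w) * mval u w else 0.
Definition qterm (j : nat) (u : R) (w : list step) : R :=
  if Nat.eqb (nU2 w) j then INR (weight w) * mval u w else 0.
Definition Fpoly j n u := RS (words n) (fterm j u).
Definition Qpoly j n u := RS (words n) (qterm j u).
Definition Fc (j n : nat) (u : R) : R :=
  match j with O => match n with O => 1 | _ => 0 end | S _ => Fpoly j n u end.

Lemma mval_U1 u w : mval u (w ++ [U1]) = u * mval u w.
Proof. unfold mval. rewrite meander_app. destruct (meander_from 0 w); simpl; ring. Qed.
Lemma mval_U2 u w : mval u (w ++ [U2]) = u * mval u w.
Proof. unfold mval. rewrite meander_app. destruct (meander_from 0 w); simpl; ring. Qed.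
Lemma mval_Dn u w : u * mval u (w ++ [Dn]) = mval u w - mval 0 w.
Proof.
  unfold mval. rewrite meander_app. destruct (meander_from 0 w) as [[|h]|]; simpl; ring.
Qed.
Lemma weight_snoc w s :
  weight (w ++ [s]) = (weight w * match s with U2 => 1 + length w + nU2 w | _ => 1 end)%nat.
Proof. unfold weight. rewrite wt_app. destruct s; simpl; lia. Qed.
Lemma nU2_snoc w s : nU2 (w ++ [s]) = (nU2 w + match s with U2 => 1 | _ => 0 end)%nat.
Proof. rewrite nU2_app. destruct s; reflexivity. Qed.

Lemma RS_minus L f g : RS L (fun w => f w - g w) = RS L f - RS L g.
Proof. induction L; simpl; [ring| rewrite IHL; ring]. Qed.

Lemma Qpoly_0 j u : Qpoly j 0 u = Fc j 0 u.
Proof.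
  unfold Qpoly, Fc, Fpoly, qterm, fterm. destruct j; simpl.
  - unfold mval, weight; simpl; ring.
  - unfold last_is_U2; simpl. rewrite ?andb_false_r. ring.
Qed.

Lemma Fpoly_0 j u : Fpoly j 0 u = 0.
Proof. unfold Fpoly, fterm. simpl. unfold last_is_U2; simpl. rewrite ?andb_false_r. ring. Qed.

Lemma Fpoly_S j n u : Fpoly (S j) (S n) u = INR (n + S j) * (u * Qpoly j n u).
Proof.
  unfold Fpoly, Qpoly. rewrite RS_words_snoc. rewrite <- !RS_scal.
  apply RS_ext_in. intros w Hw. apply words_len in Hw.
  unfold fterm, qterm. rewrite !last_snoc, !nU2_snoc, ?andb_false_r, ?andb_true_r.
  rewrite ?Nat.add_0_r, ?Rplus_0_l, ?Rplus_0_r.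
  replace (nU2 w + 1 =? S j)%nat with (nU2 w =? j)%nat
    by (destruct (Nat.eqb_spec (nU2 w) j); destruct (Nat.eqb_spec (nU2 w + 1) (S j)); auto; lia).
  destruct (Nat.eqb_spec (nU2 w) j) as [E|E].
  - rewrite weight_snoc, mval_U2, mult_INR, Hw, E.
    replace (1 + n + j)%nat with (n + S j)%nat by lia. ring.
  - ring.
Qed.

Lemma Qpoly_S j n u :
  u * Qpoly j (S n) u = u * Fc j (S n) u + u ^ 2 * Qpoly j n u + (Qpoly j n u - Qpoly j n 0).
Proof.
  assert (HF : Fc j (S n) u = RS (words n) (fun w => qterm j u (w ++ [U2]))).
  { destruct j as [|j].
    - simpl. rewrite <- (RS_zero (words n)). apply RS_ext. intro w.
      unfold qterm. rewrite nU2_snoc. replace (nU2 w + 1 =? 0)%nat with false; [reflexivity|].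
      symmetry; apply Nat.eqb_neq; lia.
    - simpl Fc. unfold Fpoly. rewrite RS_words_snoc. apply RS_ext. intro w.
      unfold fterm, qterm. rewrite !last_snoc, !andb_false_r, andb_true_r. ring. }
  rewrite HF. unfold Qpoly. rewrite RS_words_snoc.
  rewrite <- !RS_scal. rewrite <- RS_minus. rewrite <- !RS_plus.
  apply RS_ext. intro w. unfold qterm. rewrite !nU2_snoc, !Nat.add_0_r.
  destruct (Nat.eqb (nU2 w) j).
  - rewrite !weight_snoc, !Nat.mul_1_r. rewrite mval_U1. idtac.
    replace (u * (INR (weight w) * mval u (w ++ [Dn]))) with (INR (weight w) * (u * mval u (w ++ [Dn]))) by ring. idtac.
    pose proof (mval_Dn u w) as HD. transitivity (u * (INR (weight w) * (u * mval u w)) + u * (if (nU2 w + 1 =? j)%nat then INR (weight w * (1 + length w + nU2 w)) * mval u (w ++ [U2]) else 0) + INR (weight w) * (u * mval u (w ++ [Dn]))); [ring|]. rewrite HD. ring.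
  - ring.
Qed.

Lemma INR_list_sum_map (h : list step -> nat) L :
  INR (list_sum (map h L)) = RS L (fun w => INR (h w)).
Proof. induction L; simpl; [reflexivity|]. rewrite plus_INR, IHL. reflexivity. Qed.

Lemma sum_RS (g : nat -> list step -> R) L n :
  sum_f_R0 (fun l => RS L (g l)) n = RS L (fun w => sum_f_R0 (fun l => g l w) n).
Proof.
  induction n; simpl; [reflexivity|]. rewrite IHn, <- RS_plus. reflexivity.
Qed.

Lemma sum_single (a u : R) h n : (h <= n)%nat ->
  sum_f_R0 (fun l => if Nat.eqb h l then a * u ^ l else 0) n = a * u ^ h.
Proof.
  induction n; intro H.
  - replace h with 0%nat by lia. simpl. reflexivity.
  - rewrite tech5.
    destruct (Nat.eq_dec h (S n)) as [->|Hn].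
    + rewrite Nat.eqb_refl.
      assert (sum_f_R0 (fun l => if Nat.eqb (S n) l then a * u ^ l else 0) n = 0) as ->.
      { clear. assert (forall m, (m <= n)%nat -> sum_f_R0 (fun l => if Nat.eqb (S n) l then a * u ^ l else 0) m = 0).
        { induction m; intro Hm.
          - simpl. reflexivity.
          - rewrite tech5.
            rewrite IHm by lia. replace (Nat.eqb (S n) (S m)) with false. ring.
            symmetry; apply Nat.eqb_neq; lia. }
        apply H; lia. }
      simpl. ring.
    + rewrite IHn by lia. replace (Nat.eqb h (S n)) with false. ring.
      symmetry; apply Nat.eqb_neq; lia.
Qed.

Lemma sum_zero n : sum_f_R0 (fun _ => 0) n = 0.
Proof. induction n; simpl; [reflexivity| rewrite IHn; ring]. Qed.

Lemma conv_gen (c : list step -> bool) n u :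
  sum_f_R0 (fun l => INR (list_sum (map (fun w => if (ends_at w l && c w)%bool then weight w else 0%nat) (words n))) * u ^ l) n
  = RS (words n) (fun w => if c w then INR (weight w) * mval u w else 0).
Proof.
  transitivity (sum_f_R0 (fun l => RS (words n) (fun w => INR (if (ends_at w l && c w)%bool then weight w else 0%nat) * u ^ l)) n).
  { apply sum_eq. intros l _. rewrite INR_list_sum_map, Rmult_comm, <- RS_scal.
    apply RS_ext. intro w. ring. }
  rewrite sum_RS. apply RS_ext_in. intros w Hw. apply words_len in Hw.
  unfold ends_at, mval. destruct (meander_from 0 w) as [h|] eqn:Em.
  - assert (Hh : (h <= n)%nat) by (apply meander_le in Em; simpl in Em; lia).
    destruct (c w).
    + rewrite <- (sum_single (INR (weight w)) u h n Hh). apply sum_eq. intros l _.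
      rewrite andb_true_r. destruct (Nat.eqb h l); simpl; ring.
    + rewrite <- (sum_zero n). apply sum_eq. intros l _. rewrite andb_false_r. simpl. ring.
  - transitivity (sum_f_R0 (fun _ => 0) n).
    + apply sum_eq. intros l _. simpl. ring.
    + rewrite sum_zero. destruct (c w); ring.
Qed.

Lemma conv_F j n u :
  sum_f_R0 (fun l => INR (fcoef j n l) * u ^ l) n = Fpoly j n u.
Proof.
  unfold fcoef, Fpoly, fterm.
  rewrite <- (conv_gen (fun w => Nat.eqb (nU2 w) j && last_is_U2 w)%bool).
  apply sum_eq. intros l _. f_equal. f_equal. f_equal. apply map_ext. intro w.
  rewrite andb_assoc. reflexivity.
Qed.

Lemma conv_B k n z : INR (bcoef k n) * z ^ n = z ^ n * Qpoly k n 0.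
Proof.
  rewrite Rmult_comm. f_equal. unfold bcoef, Qpoly.
  rewrite INR_list_sum_map. apply RS_ext. intro w.
  unfold qterm, ends_at, mval. destruct (meander_from 0 w) as [[|h]|]; simpl;
  destruct (Nat.eqb (nU2 w) k); simpl; ring.
Qed.

Lemma mval_bound u w : Rabs u <= 1 -> Rabs (mval u w) <= 1.
Proof.
  intro Hu. unfold mval. destruct (meander_from 0 w).
  - rewrite <- RPow_abs. rewrite <- (pow1 n). apply pow_incr. split; [apply Rabs_pos|exact Hu].
  - rewrite Rabs_R0; lra.
Qed.

Definition cb (j n : nat) : R := 3 ^ n * (2 * INR n + 1) ^ j.

Lemma weight_le w j : nU2 w = j -> INR (weight w) <= (2 * INR (length w) + 1) ^ j.
Proof.
  intro H. unfold weight. eapply Rle_trans; [apply le_INR, wt_bound|].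
  rewrite pow_INR, H. right. f_equal. rewrite plus_INR, mult_INR. simpl. ring.
Qed.

Lemma term_bound (b : bool) j u w :
  Rabs u <= 1 -> (b = true -> nU2 w = j) ->
  Rabs (if b then INR (weight w) * mval u w else 0) <= (2 * INR (length w) + 1) ^ j.
Proof.
  intros Hu Hb. destruct b.
  - rewrite Rabs_mult, Rabs_right by (apply Rle_ge, pos_INR).
    rewrite <- (Rmult_1_r ((2 * INR (length w) + 1) ^ j)).
    apply Rmult_le_compat; [apply pos_INR|apply Rabs_pos| apply weight_le; auto| apply mval_bound; auto].
  - rewrite Rabs_R0. apply pow_le. pose proof (pos_INR (length w)). lra.
Qed.

Lemma Qpoly_bound j n u : Rabs u <= 1 -> Rabs (Qpoly j n u) <= cb j n.
Proof.
  intro Hu. unfold Qpoly, cb. apply RS_words_bound. intros w Hw. rewrite <- Hw.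
  unfold qterm. apply term_bound; auto. intro H. apply Nat.eqb_eq; auto.
Qed.

Lemma Fc_bound j n u : Rabs u <= 1 -> Rabs (Fc j n u) <= cb j n.
Proof.
  intro Hu. destruct j as [|j].
  - unfold cb. simpl. rewrite Rmult_1_r.
    assert (1 <= 3 ^ n) by (rewrite <- (pow1 n); apply pow_incr; lra).
    destruct n; rewrite ?Rabs_R1, ?Rabs_R0; lra.
  - simpl Fc. unfold Fpoly, cb. apply RS_words_bound. intros w Hw. rewrite <- Hw.
    unfold fterm. apply term_bound; auto. intro H. apply andb_prop in H. apply Nat.eqb_eq; tauto.
Qed.

Lemma lim_inv_S : is_lim_seq (fun n => / (INR n + 1)) 0.
Proof.
  assert (H : is_lim_seq (fun n => INR (S n)) p_infty) by (apply (is_lim_seq_incr_1 INR); apply is_lim_seq_INR).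
  apply is_lim_seq_inv in H; [|discriminate].
  eapply is_lim_seq_ext; [|exact H]. intro n. cbv beta. rewrite <- S_INR. reflexivity.
Qed.

Lemma lim_q : is_lim_seq (fun n => (2 * INR (S n) + 1) / (2 * INR n + 1)) 1.
Proof.
  apply is_lim_seq_le_le with (u := fun _ => 1) (w := fun n => 1 + 2 * / (INR n + 1)).
  - intro n. pose proof (pos_INR n). rewrite S_INR. split.
    + apply Rcomplements.Rle_div_r; lra.
    + replace ((2 * (INR n + 1) + 1) / (2 * INR n + 1)) with (1 + 2 / (2 * INR n + 1)) by (field; lra).
      apply Rplus_le_compat_l. unfold Rdiv. apply Rmult_le_compat_l; [lra|].
      apply Rinv_le_contravar; lra.
  - apply is_lim_seq_const.
  - replace (Finite 1) with (Finite (1 + 2 * 0)) by (f_equal; ring).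
    apply is_lim_seq_plus'; [apply is_lim_seq_const|].
    pose proof (is_lim_seq_scal_l _ 2 _ lim_inv_S) as HH. simpl in HH.
    exact HH.
Qed.

Lemma lim_q_pow j : is_lim_seq (fun n => ((2 * INR (S n) + 1) / (2 * INR n + 1)) ^ j) 1.
Proof.
  induction j.
  - simpl. apply is_lim_seq_const.
  - replace (Finite 1) with (Finite (1 * 1)) by (f_equal; ring).
    simpl. apply is_lim_seq_mult'; [apply lim_q| exact IHj].
Qed.

Lemma cb_pos j n : 0 < cb j n.
Proof.
  unfold cb. apply Rmult_lt_0_compat; apply pow_lt; [lra|]. pose proof (pos_INR n); lra.
Qed.

Lemma cb_radius j : CV_radius (cb j) = / 3.
Proof.
  apply CV_radius_finite_DAlembert; [intro n; pose proof (cb_pos j n); lra| lra|].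
  apply is_lim_seq_ext with (u := fun n => 3 * ((2 * INR (S n) + 1) / (2 * INR n + 1)) ^ j).
  - intro n. unfold cb. rewrite Rabs_right.
    + pose proof (pos_INR n) as Hn. unfold Rdiv. rewrite Rpow_mult_distr, pow_inv. change (3 ^ S n) with (3 * 3 ^ n). field. split; apply pow_nonzero; lra.
    + apply Rle_ge. unfold Rdiv. apply Rmult_le_pos; [left; apply cb_pos| left; apply Rinv_0_lt_compat, cb_pos].
  - replace (Finite 3) with (Rbar_mult 3 1) by (simpl; f_equal; ring).
    apply is_lim_seq_scal_l. apply lim_q_pow.
Qed.

Lemma CV_radius_le_comp (a c : nat -> R) :
  (forall n, Rabs (a n) <= Rabs (c n)) -> Rbar_le (CV_radius c) (CV_radius a).
Proof.
  intro H. destruct (CV_radius_bounded c) as [_ Hc]. apply Hc.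
  intros r [M HM]. destruct (CV_radius_bounded a) as [Ha _]. apply Ha.
  exists M. intro n. eapply Rle_trans; [|apply (HM n)]. rewrite !Rabs_mult.
  apply Rmult_le_compat_r; [apply Rabs_pos| apply H].
Qed.

Lemma radius_of_bound j (a : nat -> R) :
  (forall n, Rabs (a n) <= cb j n) -> Rbar_le (/ 3) (CV_radius a).
Proof.
  intro H. rewrite <- (cb_radius j). apply CV_radius_le_comp.
  intro n. rewrite (Rabs_right (cb j n)); [apply H| left; apply cb_pos].
Qed.

Lemma ex_series_of_bound j (a : nat -> R) x :
  (forall n, Rabs (a n) <= cb j n) -> Rabs x < / 3 -> ex_series (fun n => x ^ n * a n).
Proof.
  intros H Hx. assert (Hr : Rbar_lt (Rabs x) (CV_radius (cb j))) by (rewrite cb_radius; exact Hx).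
  apply CV_disk_inside in Hr.
  apply (@ex_series_le R_AbsRing R_CompleteNormedModule _ _ ) with (2 := Hr). intro n.
  change (norm (x ^ n * a n)) with (Rabs (x ^ n * a n)).
  rewrite !Rabs_mult, Rmult_comm. apply Rmult_le_compat_r; [apply Rabs_pos|].
  rewrite (Rabs_right (cb j n)); [apply H| left; apply cb_pos].
Qed.

Definition Fs j t u := Series (fun n => t ^ n * Fc j n u).
Definition Qs j t u := Series (fun n => t ^ n * Qpoly j n u).

Lemma exF j t u : Rabs t < / 3 -> Rabs u <= 1 -> ex_series (fun n => t ^ n * Fc j n u).
Proof. intros; apply (ex_series_of_bound j); auto. intro; apply Fc_bound; auto. Qed.
Lemma exQ j t u : Rabs t < / 3 -> Rabs u <= 1 -> ex_series (fun n => t ^ n * Qpoly j n u).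
Proof. intros; apply (ex_series_of_bound j); auto. intro; apply Qpoly_bound; auto. Qed.

Lemma ex_scal c (a : nat -> R) : ex_series a -> ex_series (fun n => c * a n).
Proof. intro H. apply (ex_series_scal_l c a H). Qed.

Lemma ex_plus (a b : nat -> R) : ex_series a -> ex_series b -> ex_series (fun n => a n + b n).
Proof. intros Ha Hb. apply (ex_series_plus a b Ha Hb). Qed.

Lemma Series_zero : Series (fun _ => 0) = 0.
Proof. transitivity (PSeries (fun _ => 0) 0); [unfold PSeries; apply Series_ext; intro; ring| apply PSeries_const_0]. Qed.

Lemma Fgf_Fs j t u : Rabs t < / 3 -> Rabs u <= 1 -> Fgf j t u = Fs j t u.
Proof.
  intros Ht Hu. destruct j as [|j].
  - unfold Fs. rewrite Series_incr_1 by (apply exF; auto).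
    simpl.
    rewrite (Series_ext _ (fun _ => 0)) by (intro; simpl; ring). rewrite Series_zero. ring.
  - unfold Fgf, Fs. apply Series_ext. intro n. rewrite conv_F. reflexivity.
Qed.

Lemma FE j t u : Rabs t < / 3 -> Rabs u <= 1 ->
  u * Qs j t u = u * Fs j t u + t * u ^ 2 * Qs j t u + t * Qs j t u - t * Qs j t 0.
Proof.
  intros Ht Hu.
  assert (H0 : Rabs 0 <= 1) by (rewrite Rabs_R0; lra).
  pose proof (exQ j t u Ht Hu) as EQ. pose proof (exQ j t 0 Ht H0) as EQ0.
  pose proof (exF j t u Ht Hu) as EF.
  assert (EFs : ex_series (fun n => u * (t ^ S n * Fc j (S n) u))).
  { apply ex_scal. apply (ex_series_incr_1 (fun n => t ^ n * Fc j n u)). exact EF. }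
  unfold Qs, Fs. rewrite <- !Series_scal_l.
  rewrite (Series_incr_1 (fun n => u * (t ^ n * Qpoly j n u))) by (apply ex_scal; auto).
  rewrite (Series_incr_1 (fun n => u * (t ^ n * Fc j n u))) by (apply ex_scal; auto).
  rewrite (Series_ext (fun n => u * (t ^ S n * Qpoly j (S n) u))
     (fun n => ((u * (t ^ S n * Fc j (S n) u) + t * u ^ 2 * (t ^ n * Qpoly j n u)) + t * (t ^ n * Qpoly j n u)) - t * (t ^ n * Qpoly j n 0))).
  2:{ intro n. simpl pow at 1. 
      replace (u * (t * t ^ n * Qpoly j (S n) u)) with (t * t ^ n * (u * Qpoly j (S n) u)) by ring.
      rewrite Qpoly_S. simpl. ring. }
  rewrite Series_minus, !Series_plus; auto; try (apply ex_scal; auto).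
  2: apply ex_plus; auto; apply ex_scal; auto.
  2: apply ex_plus; [apply ex_plus|]; auto; apply ex_scal; auto.
  rewrite Qpoly_0. rewrite !Series_scal_l. ring.
Qed.

Lemma E_facts t : 0 < Rabs t < / 6 ->
  t * Efun t ^ 2 - Efun t + t = 0 /\ Rabs (Efun t) <= 2 * Rabs t /\ Efun t <> 0 /\ Dfun t = Efun t / t.
Proof.
  intros [Ht0 Ht]. assert (tn : t <> 0) by (intro; subst; rewrite Rabs_R0 in Ht0; lra).
  assert (Ht2 : t ^ 2 < 1 / 36).
  { destruct (Rcase_abs t); [rewrite Rabs_left in * by lra| rewrite Rabs_right in * by lra]; nra. }
  set (s := sqrt (1 - 4 * t ^ 2)).
  assert (Hs2 : s * s = 1 - 4 * t ^ 2) by (apply sqrt_sqrt; lra).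
  assert (Hs0 : 0 <= s) by apply sqrt_pos.
  assert (HE : Efun t = 2 * t / (1 + s)).
  { unfold Efun. fold s. field_simplify_eq; [| split; [lra|auto]]. nra. }
  split; [|split; [|split]].
  - rewrite HE. field_simplify_eq; [|lra]. nra.
  - rewrite HE. unfold Rdiv. rewrite Rabs_mult, Rabs_inv, Rabs_mult.
    rewrite (Rabs_right 2), (Rabs_right (1 + s)) by lra.
    rewrite <- (Rmult_1_r (2 * Rabs t)) at 2.
    apply Rmult_le_compat_l; [pose proof (Rabs_pos t); lra|].
    rewrite <- Rinv_1. apply Rinv_le_contravar; lra.
  - rewrite HE. unfold Rdiv. apply Rmult_integral_contrapositive. split; [lra|].
    apply Rinv_neq_0_compat; lra.
  - unfold Dfun, Efun. field. auto.
Qed.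

Lemma KL0 j t : 0 < Rabs t < / 6 -> t * Qs j t 0 = Efun t * Fs j t (Efun t).
Proof.
  intros Ht. destruct (E_facts t Ht) as [H1 [H2 _]].
  assert (Ht3 : Rabs t < / 3) by lra.
  assert (HE : Rabs (Efun t) <= 1) by lra.
  pose proof (FE j t (Efun t) Ht3 HE) as F.
  set (E := Efun t) in *.
  replace (t * Qs j t 0) with (E * Fs j t E + (t * E ^ 2 - E + t) * Qs j t E) by lra.
  rewrite H1. ring.
Qed.

Lemma KL1 j t u : 0 < Rabs t < / 6 -> Rabs u <= 1 -> u <> Efun t ->
  t ^ j * ((u * Fs j t u - Efun t * Fs j t (Efun t)) / (u - Efun t)) * Mup t u
  = t ^ S j * (u * Qs j t u).
Proof.
  intros Ht Hu HuE. destruct (E_facts t Ht) as [H1 [H2 [H3 _]]].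
  assert (Ht3 : Rabs t < / 3) by lra.
  assert (tn : t <> 0) by (intro; subst; rewrite Rabs_R0 in Ht; lra).
  pose proof (FE j t u Ht3 Hu) as F.
  pose proof (KL0 j t Ht) as K0.
  unfold Mup. set (E := Efun t) in *.
  assert (HuE1 : 1 - u * E <> 0).
  { intro Hc. assert (Rabs (u * E) <= 1 * (2 * Rabs t)).
    { rewrite Rabs_mult. apply Rmult_le_compat; auto; apply Rabs_pos. }
    replace (u * E) with 1 in H by lra. rewrite Rabs_R1 in H. lra. }
  replace (u * Fs j t u - E * Fs j t E) with ((u - t * u ^ 2 - t) * Qs j t u) by (rewrite <- K0; lra).
  replace (u - t * u ^ 2 - t) with (t * (u - E) * (1 - u * E) / E).
  2:{ field_simplify_eq; auto. match goal with |- ?G => idtac G end. nra. }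
  simpl. field. repeat split; auto. intro; apply HuE; lra.
Qed.

Lemma cb_mono j m n : (m <= n)%nat -> cb j m <= cb j n.
Proof.
  intro H. unfold cb. apply le_INR in H.
  apply Rmult_le_compat; try (apply pow_le; pose proof (pos_INR m); lra).
  - apply Rle_pow; [lra|]. apply INR_le in H. exact H.
  - apply pow_incr. pose proof (pos_INR m). lra.
Qed.

Lemma E_cont z : 0 < Rabs z < / 6 -> continuous Efun z.
Proof.
  intros [H0 H1]. apply (@ex_derive_continuous R_AbsRing R_NormedModule). unfold Efun.
  assert (zn : z <> 0) by (intro; subst; rewrite Rabs_R0 in H0; lra).
  assert (Hz2 : z ^ 2 < 1 / 36).
  { destruct (Rcase_abs z); [rewrite Rabs_left in * by lra| rewrite Rabs_right in * by lra]; nra. }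
  auto_derive. repeat split; try lra; auto.
Qed.

Lemma loc_abs z : 0 < Rabs z < / 6 -> locally z (fun t => 0 < Rabs t < / 6).
Proof.
  intros [H0 H1]. destruct (Rcase_abs z) as [Hn|Hp].
  - rewrite Rabs_left in * by lra.
    apply locally_interval with (a := Finite (- / 6)) (b := Finite 0); simpl; try lra.
    intros y Hy1 Hy2. rewrite Rabs_left by lra. lra.
  - rewrite Rabs_right in * by lra.
    apply locally_interval with (a := Finite 0) (b := Finite (/ 6)); simpl; try lra.
    intros y Hy1 Hy2. rewrite Rabs_right by lra. lra.
Qed.

Lemma loc_neq z u : 0 < Rabs z < / 6 -> u <> Efun z -> locally z (fun t => u <> Efun t).
Proof.
  intros Hz Hu. pose proof (E_cont z Hz) as Hc.
  assert (HP : locally (Efun z) (fun y => u <> y)).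
  2: exact (Hc _ HP).
  destruct (Rlt_or_le (Efun z) u) as [Hl|Hl].
  - apply locally_interval with (a := m_infty) (b := Finite u); simpl; auto.
    intros y _ Hy. lra.
  - apply locally_interval with (a := Finite u) (b := p_infty); simpl; auto.
    + lra.
    + intros y Hy _. lra.
Qed.

Lemma part1 : forall k : nat, (1 <= k)%nat ->
    exists r : R, 0 < r /\
      forall z u : R, 0 < Rabs z < r -> Rabs u < r -> u <> Efun z ->
        Fgf k z u =
          z / z ^ (k - 1) *
          Derive (fun t => t ^ (k - 1) *
                   ((u * Fgf (k - 1) t u - Efun t * Fgf (k - 1) t (Efun t))
                      / (u - Efun t)) * Mup t u) z.
Proof.
  intros k Hk. destruct k as [|j]; [lia|]. exists (/ 6). split; [lra|].
  intros z u Hz Hu HuE. replace (S j - 1)%nat with j by lia.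
  assert (Hu1 : Rabs u <= 1) by lra.
  set (b := fun n => u * Qpoly j n u).
  assert (Hloc : locally z (fun t => t ^ j * ((u * Fgf j t u - Efun t * Fgf j t (Efun t)) / (u - Efun t)) * Mup t u
                                 = PSeries (PS_incr_n b (S j)) t)).
  { generalize (filter_and _ _ (loc_abs z Hz) (loc_neq z u Hz HuE)).
    apply filter_imp. intros t [Ht HtE].
    destruct (E_facts t Ht) as [_ [HE _]].
    rewrite !Fgf_Fs by lra. rewrite KL1 by (auto; lra).
    rewrite PSeries_incr_n. f_equal. unfold PSeries, Qs, b.
    rewrite <- Series_scal_l. apply Series_ext. intro n. ring. }
  match goal with |- _ = _ * Derive ?f z => rewrite (Derive_ext_loc f (PSeries (PS_incr_n b (S j))) z Hloc) end.
  assert (Hb : forall n, Rabs (PS_incr_n b (S j) n) <= cb j n).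
  { intro n. rewrite PS_incr_n_simplify. destruct (le_lt_dec (S j) n).
    - unfold b. rewrite Rabs_mult. eapply Rle_trans.
      + apply Rmult_le_compat; [apply Rabs_pos|apply Rabs_pos|exact Hu1|apply Qpoly_bound; exact Hu1].
      + rewrite Rmult_1_l. apply cb_mono. lia.
    - change (Rabs (@zero R_AbsRing) <= cb j n). replace (@zero R_AbsRing) with 0 by reflexivity. rewrite Rabs_R0. left; apply cb_pos. }
  rewrite Derive_PSeries.
  2:{ eapply Rbar_lt_le_trans; [|apply (radius_of_bound j _ Hb)]. simpl. lra. }
  set (b' := fun m => INR (m + S j) * b m).
  rewrite (PSeries_ext _ (PS_incr_n b' j)).
  2:{ intro n. unfold PS_derive. rewrite !PS_incr_n_simplify.
      destruct (le_lt_dec (S j) (S n)); destruct (le_lt_dec j n); try lia.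
      - unfold b'. replace (S n - S j)%nat with (n - j)%nat by lia.
        f_equal. f_equal. lia.
      - change (INR (S n) * 0 = 0). ring. }
  rewrite PSeries_incr_n.
  assert (zn : z <> 0) by (intro; subst; rewrite Rabs_R0 in Hz; lra).
  replace (z / z ^ j * (z ^ j * PSeries b' z)) with (z * PSeries b' z) by (field; apply pow_nonzero; auto).
  rewrite Fgf_Fs by lra. unfold Fs.
  rewrite Series_incr_1 by (apply exF; lra).
  simpl Fc at 1. rewrite Fpoly_0, Rmult_0_r, Rplus_0_l.
  unfold PSeries. rewrite <- Series_scal_l. apply Series_ext. intro n.
  simpl Fc. rewrite Fpoly_S. unfold b', b. simpl pow. ring.
Qed.

Lemma part2 : forall k : nat,
    exists r : R, 0 < r /\
      forall z : R, 0 < Rabs z < r ->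
        Bgf k z = Fgf k z (Efun z) * Dfun z.
Proof.
  intro k. exists (/ 6). split; [lra|]. intros z Hz.
  destruct (E_facts z Hz) as [_ [HE [_ HD]]].
  assert (zn : z <> 0) by (intro; subst; rewrite Rabs_R0 in Hz; lra).
  rewrite Fgf_Fs by lra. rewrite HD.
  unfold Bgf. rewrite (Series_ext _ (fun n => z ^ n * Qpoly k n 0)) by (intro; apply conv_B).
  fold (Qs k z 0).
  replace (Qs k z 0) with ((z * Qs k z 0) / z) by (field; auto).
  rewrite KL0 by auto. field. auto.
Qed.

Theorem theorem13 :
  (forall k : nat, (1 <= k)%nat ->
    exists r : R, 0 < r /\
      forall z u : R, 0 < Rabs z < r -> Rabs u < r -> u <> Efun z ->
        Fgf k z u =
          z / z ^ (k - 1) *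
          Derive (fun t => t ^ (k - 1) *
                   ((u * Fgf (k - 1) t u - Efun t * Fgf (k - 1) t (Efun t))
                      / (u - Efun t)) * Mup t u) z)
  /\
  (forall k : nat,
    exists r : R, 0 < r /\
      forall z : R, 0 < Rabs z < r ->
        Bgf k z = Fgf k z (Efun z) * Dfun z).
Proof.
  split; [exact part1 | exact part2].
Qed.
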